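(* If $\mathrm{char}(\Bbbk)=2$, then $G=\{g_1,g_2\}$ with $g_1=z^2+x^2y+y^5z^3$ and $g_2=y^3+x^4+y^3z^5+x^2y^4z^3$ is a standard basis of $P$ with respect to the negative degree reverse lexicographic order $>_{\rm ds}$.
   Context: $\Bbbk$ is a field, $\rho:\Bbbk[[x,y,z]]\to\Bbbk[[t]]$ is the $\Bbbk$-algebra morphism with $\rho(x)=t^6+t^{31}$, $\rho(y)=t^8$, $\rho(z)=t^{10}$, and $P=\ker\rho$. The order $>_{\rm ds}$ on monomials $x^\alpha=x^{\alpha_1}y^{\alpha_2}z^{\alpha_3}$: $x^\alpha>_{\rm ds}x^\beta$ iff $|\alpha|<|\beta|$, or $|\alpha|=|\beta|$ and there is $i\in\{1,2\}$ with $\alpha_3=\beta_3,\ldots,\alpha_{i+1}=\beta_{i+1}$ and $\alpha_i<\beta_i$ (so $1>x>y>z>x^2>xy>y^2>xz>yz>z^2>\cdots$). For $0\ne f\in\Bbbk[[x,y,z]]$, the leading monomial $\mathrm{LM}(f)$ is the $>_{\rm ds}$-largest monomial in the support of $f$. A finite set $G\subseteq I$ is a standard basis of an ideal $I\subseteq\Bbbk[[x,y,z]]$ if the ideal generated by $\{\mathrm{LM}(g):g\in G,g\neq0\}$ equals the ideal generated by $\{\mathrm{LM}(f): f\in I, f\ne0\}$. *)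

(* Defs.v *)
(* Formal power series in x,y,z over a field K, represented
   as coefficient functions on exponent triples (a1,a2,a3) <-> x^a1 y^a2 z^a3. *)
From mathcomp Require Import all_boot all_order all_algebra.
Set Implicit Arguments. Unset Strict Implicit. Unset Printing Implicit Defensive.
Import GRing.Theory.
Local Open Scope ring_scope.

Section PS.
Variable K : fieldType.

Fixpoint In {A : Type} (x : A) (l : seq A) : Prop :=
  if l is y :: l' then y = x \/ In x l' else False.

Definition mon := (nat * nat * nat)%type.
Definition e1 (a : mon) : nat := a.1.1.
Definition e2 (a : mon) : nat := a.1.2.
Definition e3 (a : mon) : nat := a.2.
Definition mdeg (a : mon) : nat := (e1 a + e2 a + e3 a)%N.

Definition ps := mon -> K.

Definition ps0 : ps := fun _ => 0.
Definition psadd (f g : ps) : ps := fun a => f a + g a.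
Definition psmul (f g : ps) : ps := fun a =>
  \sum_(i < (e1 a).+1) \sum_(j < (e2 a).+1) \sum_(k < (e3 a).+1)
     f ((i : nat, j : nat), k : nat) * g (((e1 a - i)%N, (e2 a - j)%N), (e3 a - k)%N).
Definition psmon (m : mon) : ps := fun a => if a == m then 1 else 0.

Definition us := nat -> K.
Definition usmul (p q : us) : us := fun n => \sum_(i < n.+1) p i * q (n - i)%N.
Definition us1 : us := fun n => if n == 0%N then 1 else 0.
Definition uspow (p : us) (k : nat) : us := iter k (usmul p) us1.

(* Substitution f(p1,p2,p3) for p1,p2,p3 with zero constant term (the unique
   local K-algebra morphism K[[x,y,z]] -> K[[t]] sending x,y,z to p1,p2,p3).
   Truncating each exponent at n is exact because p1^a p2^b p3^c has order
   >= a+b+c when the p_i have zero constant term. *)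
Definition subst (p1 p2 p3 : us) (f : ps) : us := fun n =>
  \sum_(a < n.+1) \sum_(b < n.+1) \sum_(c < n.+1)
     f ((a : nat, b : nat), c : nat) *
     usmul (uspow p1 a) (usmul (uspow p2 b) (uspow p3 c)) n.

Definition tpow (k : nat) : us := fun n => if n == k then 1 else 0.
Definition rho_x : us := fun n => tpow 6 n + tpow 31 n.
Definition rho_y : us := tpow 8.
Definition rho_z : us := tpow 10.

Definition rho (f : ps) : us := subst rho_x rho_y rho_z f.

Definition P (f : ps) : Prop := forall n, rho f n = 0.

Definition ds_gt (a b : mon) : Prop :=
  (mdeg a < mdeg b)%N \/
  (mdeg a = mdeg b /\
    ((e3 a < e3 b)%N \/
     (e3 a = e3 b /\ (e2 a < e2 b)%N) \/
     (e3 a = e3 b /\ e2 a = e2 b /\ (e1 a < e1 b)%N))).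

Definition ps_nonzero (f : ps) : Prop := exists a, f a != 0.

Definition is_LM (f : ps) (m : mon) : Prop :=
  f m != 0 /\ forall a, f a != 0 -> a = m \/ ds_gt m a.

Definition ideal_gen (S : ps -> Prop) (h : ps) : Prop :=
  exists l : seq (ps * ps),
    (forall p, In p l -> S p.2) /\
    h = foldr (fun p acc => psadd (psmul p.1 p.2) acc) ps0 l.

Definition standard_basis (I : ps -> Prop) (G : seq ps) : Prop :=
  (forall g, In g G -> I g) /\
  forall h,
    ideal_gen (fun s => exists g m, In g G /\ ps_nonzero g /\ is_LM g m
                                    /\ s = psmon m) h
    <-> ideal_gen (fun s => exists f m, I f /\ ps_nonzero f /\ is_LM f m
                                    /\ s = psmon m) h.

Definition X (a1 a2 a3 : nat) : ps := psmon ((a1, a2), a3).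

Definition g1 : ps := psadd (X 0 0 2) (psadd (X 2 1 0) (X 0 5 3)).
Definition g2 : ps :=
  psadd (X 0 3 0) (psadd (X 4 0 0) (psadd (X 0 3 5) (X 2 4 3))).

End PS.

(* Main.v *)
Require Import Defs.
From mathcomp Require Import all_boot all_order all_algebra.
From mathcomp Require Import zify ring.
From Stdlib Require Import FunctionalExtensionality.
Set Implicit Arguments. Unset Strict Implicit. Unset Printing Implicit Defensive.
Import GRing.Theory.
Local Open Scope ring_scope.
Lemma usmul_ext (K : fieldType) (p p' q q' : us K) n :
  (forall i, p i = p' i) -> (forall i, q i = q' i) -> usmul p q n = usmul p' q' n.
Proof. by move=> hp hq; rewrite /usmul; apply: eq_bigr => i _; rewrite hp hq. Qed.

Lemma usmul_tpow_l (K : fieldType) k (q : us K) n :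
  usmul (tpow K k) q n = if (k <= n)%N then q (n - k)%N else 0.
Proof.
rewrite /usmul /tpow; case: leqP => hk.
  have hk' : (k < n.+1)%N by lia.
  rewrite (bigD1 (Ordinal hk')) //= eqxx mul1r big1 ?addr0 // => i hi.
  by rewrite ifF ?mul0r //; apply/negbTE; move: hi; apply: contra => /eqP e; apply/eqP/val_inj.
rewrite big1 // => i _; rewrite ifF ?mul0r //; apply/negbTE; apply/eqP => e.
have := ltn_ord i; lia.
Qed.

Lemma usmul_tpow_r (K : fieldType) k (p : us K) n :
  usmul p (tpow K k) n = if (k <= n)%N then p (n - k)%N else 0.
Proof.
rewrite /usmul /tpow; case: leqP => hk.
  have hk' : (n - k < n.+1)%N by lia.
  rewrite (bigD1 (Ordinal hk')) //=.
  rewrite ifT; last by apply/eqP; lia.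
  rewrite mulr1 big1 ?addr0 // => i hi.
  rewrite ifF ?mulr0 //; apply/negbTE; move: hi; apply: contra => /eqP e; apply/eqP/val_inj => /=.
  have := ltn_ord i; lia.
rewrite big1 // => i _; rewrite ifF ?mulr0 //; apply/negbTE; apply/eqP => e.
have := ltn_ord i; lia.
Qed.

Lemma usmul_addl (K : fieldType) (p p' q : us K) n :
  usmul (fun i => p i + p' i) q n = usmul p q n + usmul p' q n.
Proof. by rewrite /usmul -big_split; apply: eq_bigr => i _; rewrite mulrDl. Qed.

Lemma uspow_tpow (K : fieldType) k b n : uspow (tpow K k) b n = tpow K (k * b) n.
Proof.
elim: b n => [|b IH] n.
  by rewrite /uspow /= /us1 /tpow muln0.
rewrite /uspow iterS -/(uspow _ b) usmul_tpow_l.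
case: leqP => h.
  rewrite IH /tpow; congr (if _ then _ else _); apply/eqP/eqP; lia.
by rewrite /tpow ifF //; apply/eqP; lia.
Qed.

Definition Xs (K : fieldType) a := uspow (rho_x K) a.
Definition wt (x : mon) := (6 * e1 x + 8 * e2 x + 10 * e3 x)%N.

Lemma Xs_rec (K : fieldType) a N : Xs K a.+1 N =
  (if (6 <= N)%N then Xs K a (N - 6)%N else 0) + (if (31 <= N)%N then Xs K a (N - 31)%N else 0).
Proof.
rewrite /Xs /uspow iterS -/(uspow _ a) /rho_x usmul_addl !usmul_tpow_l //.
Qed.
Lemma Xs_bound (K : fieldType) a N : (N < 6 * a + 50)%N ->
  Xs K a N = (N == 6 * a)%N%:R + (N == 6 * a + 25)%N%:R * a%:R.
Proof.
elim: a N => [|a IH] N hN.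
  rewrite /Xs /uspow /= /us1 muln0 mulr0 addr0. by case: (N == 0)%N.
rewrite Xs_rec.
have E1 : (6 <= N)%N -> Xs K a (N - 6)%N = (N == 6 * a.+1)%N%:R + (N == 6 * a.+1 + 25)%N%:R * a%:R.
  move=> h; rewrite IH; last lia.
  have -> : (N - 6 == 6 * a)%N = (N == 6 * a.+1)%N by lia.
  by have -> : (N - 6 == 6 * a + 25)%N = (N == 6 * a.+1 + 25)%N by lia.
have E2 : (31 <= N)%N -> Xs K a (N - 31)%N = (N == 6 * a.+1 + 25)%N%:R.
  move=> h; rewrite IH; last lia.
  have -> : (N - 31 == 6 * a)%N = (N == 6 * a.+1 + 25)%N by lia.
  have -> : (N - 31 == 6 * a + 25)%N = false by lia.
  by rewrite mul0r addr0.
case: (leqP 6 N) => h6.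
  rewrite (E1 h6); case: (leqP 31 N) => h31.
    by rewrite (E2 h31) -natr1 mulrDr mulr1 addrA.
  have -> : (N == 6 * a.+1 + 25)%N = false by lia.
  by rewrite mul0r !addr0 mul0r addr0.
have -> : (N == 6 * a.+1)%N = false by lia.
have -> : (N == 6 * a.+1 + 25)%N = false by lia.
by rewrite ifF ?mul0r ?addr0 //; lia.
Qed.

Definition Mc (K : fieldType) (x : mon) n :=
  usmul (uspow (rho_x K) (e1 x)) (usmul (uspow (rho_y K) (e2 x)) (uspow (rho_z K) (e3 x))) n.

Lemma Mc_eq (K : fieldType) x n : Mc K x n =
  if (8 * e2 x + 10 * e3 x <= n)%N then Xs K (e1 x) (n - (8 * e2 x + 10 * e3 x))%N else 0.
Proof.
rewrite /Mc.
have Hq : forall i, usmul (uspow (rho_y K) (e2 x)) (uspow (rho_z K) (e3 x)) i = tpow K (8 * e2 x + 10 * e3 x) i.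
  move=> i; rewrite (@usmul_ext K _ (tpow K (8 * e2 x)) _ (tpow K (10 * e3 x))); last first.
    by move=> j; rewrite /rho_z uspow_tpow mulnC.
    by move=> j; rewrite /rho_y uspow_tpow mulnC.
  rewrite usmul_tpow_l /tpow; case: leqP => h.
    by have -> : (i - 8 * e2 x == 10 * e3 x)%N = (i == 8 * e2 x + 10 * e3 x)%N by lia.
  by have -> : (i == 8 * e2 x + 10 * e3 x)%N = false by lia.
by rewrite (@usmul_ext K _ (uspow (rho_x K) (e1 x)) _ _ n (fun i => erefl) Hq) usmul_tpow_r.
Qed.

Lemma Mc_bound (K : fieldType) x n : (n < 6 * mdeg x + 50)%N ->
  Mc K x n = (n == wt x)%N%:R + (n == wt x + 25)%N%:R * (e1 x)%:R.
Proof.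
move=> hn; rewrite Mc_eq /wt; rewrite /mdeg in hn; case: leqP => h.
  rewrite Xs_bound; last lia.
  have -> : (n - (8 * e2 x + 10 * e3 x) == 6 * e1 x)%N = (n == 6 * e1 x + 8 * e2 x + 10 * e3 x)%N by lia.
  by have -> : (n - (8 * e2 x + 10 * e3 x) == 6 * e1 x + 25)%N = (n == 6 * e1 x + 8 * e2 x + 10 * e3 x + 25)%N by lia.
have -> : (n == 6 * e1 x + 8 * e2 x + 10 * e3 x)%N = false by lia.
have -> : (n == 6 * e1 x + 8 * e2 x + 10 * e3 x + 25)%N = false by lia.
by rewrite mul0r addr0.
Qed.

Lemma Mc_out (K : fieldType) x n : (n < e1 x)%N || (n < e2 x)%N || (n < e3 x)%N -> Mc K x n = 0.
Proof.
move=> h; rewrite Mc_eq; case: leqP => h2 //.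
rewrite Xs_bound; last lia.
have -> : (n - (8 * e2 x + 10 * e3 x) == 6 * e1 x)%N = false by lia.
have -> : (n - (8 * e2 x + 10 * e3 x) == 6 * e1 x + 25)%N = false by lia.
by rewrite mul0r addr0.
Qed.

Definition T3 (K : fieldType) n1 n2 n3 (F : mon -> K) :=
  \sum_(i < n1) \sum_(j < n2) \sum_(k < n3) F ((i : nat, j : nat), k : nat).

Lemma rho_T3 (K : fieldType) (f : ps K) n :
  rho f n = T3 n.+1 n.+1 n.+1 (fun x => f x * Mc K x n).
Proof. by []. Qed.

Lemma psmul_T3 (K : fieldType) (f g : ps K) a :
  psmul f g a = T3 (e1 a).+1 (e2 a).+1 (e3 a).+1
    (fun y => f y * g (((e1 a - e1 y)%N, (e2 a - e2 y)%N), (e3 a - e3 y)%N)).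
Proof. by []. Qed.

Lemma T3_ext_in (K : fieldType) n1 n2 n3 (F G : mon -> K) :
  (forall i j k, (i < n1)%N -> (j < n2)%N -> (k < n3)%N -> F ((i, j), k) = G ((i, j), k)) ->
  T3 n1 n2 n3 F = T3 n1 n2 n3 G.
Proof.
move=> h; rewrite /T3; apply: eq_bigr => i _; apply: eq_bigr => j _; apply: eq_bigr => k _.
exact: h.
Qed.

Lemma T3_add (K : fieldType) n1 n2 n3 (F G : mon -> K) :
  T3 n1 n2 n3 (fun x => F x + G x) = T3 n1 n2 n3 F + T3 n1 n2 n3 G.
Proof.
rewrite /T3 -big_split; apply: eq_bigr => i _; rewrite -big_split; apply: eq_bigr => j _.
by rewrite -big_split.
Qed.

Lemma sum_if1 (K : fieldType) n (b : bool) a (v : K) :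
  \sum_(k < n) (if b && ((k : nat) == a) then v else 0) = if b then (if (a < n)%N then v else 0) else 0.
Proof.
case: b => /=; last by rewrite big1.
case: (ltnP a n) => h.
  rewrite (bigD1 (Ordinal h)) //= eqxx big1 ?addr0 // => i hi.
  rewrite ifF //; apply/negbTE; move: hi; apply: contra => /eqP e; apply/eqP/val_inj.
  by rewrite /= e.
rewrite big1 // => i _; rewrite ifF //; apply/negbTE/eqP => e; have := ltn_ord i; lia.
Qed.

Lemma sum_if0 (K : fieldType) n a (v : K) :
  \sum_(k < n) (if ((k : nat) == a) then v else 0) = if (a < n)%N then v else 0.
Proof. exact: (sum_if1 n true a v). Qed.

Lemma T3_pt (K : fieldType) n1 n2 n3 (p : mon) (v : K) :
  T3 n1 n2 n3 (fun x => if x == p then v else 0) =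
  if [&& (e1 p < n1)%N, (e2 p < n2)%N & (e3 p < n3)%N] then v else 0.
Proof.
case: p => [[p1 p2] p3]; rewrite /T3 /e1 /e2 /e3 /=.
under eq_bigr => i _ do under eq_bigr => j _ do
  (under eq_bigr => k _ do rewrite !xpair_eqE; rewrite sum_if1).
under eq_bigr => i _ do rewrite sum_if1.
rewrite sum_if0.
by case: (p1 < n1)%N; case: (p2 < n2)%N; case: (p3 < n3)%N.
Qed.

Lemma rho_add (K : fieldType) (f g : ps K) n : rho (psadd f g) n = rho f n + rho g n.
Proof.
rewrite !rho_T3 -T3_add; apply: T3_ext_in => i j k _ _ _.
by rewrite /psadd mulrDl.
Qed.

Lemma rho_mon (K : fieldType) p n : rho (psmon K p) n = Mc K p n.
Proof.
rewrite rho_T3 (@T3_ext_in _ _ _ _ _ (fun x => if x == p then Mc K p n else 0)).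
  rewrite T3_pt; case: ifP => // h; rewrite Mc_out //.
  move/negbT: h; rewrite !negb_and -!leqNgt; lia.
move=> i j k _ _ _; rewrite /psmon; case: eqP => [->|_]; by rewrite ?mul1r ?mul0r.
Qed.

Fixpoint Lx (a : nat) : seq nat :=
  if a is a'.+1 then map (addn 6) (Lx a') ++ map (addn 31) (Lx a') else [:: 0%N].

Lemma count_shift (L : seq nat) c N :
  count_mem N (map (addn c) L) = if (c <= N)%N then count_mem (N - c)%N L else 0%N.
Proof.
rewrite count_map; case: leqP => h.
  apply: eq_count => e /=; lia.
rewrite (eq_count (a2 := pred0)) ?count_pred0 // => e /=; lia.
Qed.

Lemma Xs_Lx (K : fieldType) a N : Xs K a N = (count_mem N (Lx a))%:R.
Proof.
elim: a N => [|a IH] N.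
  rewrite /Xs /uspow /= /us1 addn0; case: (N =P 0%N) => [->|/eqP h] //=; by rewrite eq_sym (negbTE h).
rewrite Xs_rec /= count_cat natrD !count_shift.
by case: leqP => h1; case: leqP => h2; rewrite ?IH.
Qed.

Lemma Mc_Lx (K : fieldType) x n :
  Mc K x n = (count_mem n (map (addn (8 * e2 x + 10 * e3 x)) (Lx (e1 x))))%:R.
Proof. by rewrite Mc_eq count_shift; case: leqP => h; rewrite ?Xs_Lx. Qed.

Lemma natr_char2 (K : fieldType) (char2 : (2%N \in [pchar K])%R) m :
  (m%:R : K) = (odd m)%:R.
Proof.
have h2 : (2%:R : K) = 0 := pcharf0 char2.
have h11 : (1 + 1 : K) = 0 by rewrite -h2.
elim: m => [|m IH] //; rewrite -natr1 IH /=; case: (odd m) => /=.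
  by rewrite h11.
by rewrite add0r.
Qed.

Lemma even_zero (K : fieldType) (char2 : (2%N \in [pchar K])%R) (L : seq nat) n :
  all (fun e => ~~ odd (count_mem e L)) L -> ((count_mem n L)%:R : K) = 0.
Proof.
move=> /allP h; rewrite natr_char2 //; case: (boolP (n \in L)) => hn.
  by move: (h n hn) => /negbTE ->.
by rewrite (count_memPn hn).
Qed.

Lemma g1_P (K : fieldType) (char2 : (2%N \in [pchar K])%R) : P (g1 K).
Proof.
move=> n; rewrite /g1 !rho_add /X !rho_mon !Mc_Lx -!natrD -!count_cat.
apply: even_zero => //.
Qed.

Lemma g2_P (K : fieldType) (char2 : (2%N \in [pchar K])%R) : P (g2 K).
Proof.
move=> n; rewrite /g2 !rho_add /X !rho_mon !Mc_Lx -!natrD -!count_cat.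
apply: even_zero => //.
Qed.

Definition Cc (K : fieldType) n (x : mon) : K :=
  (n == wt x)%N%:R + (n == wt x + 25)%N%:R * (e1 x)%:R.

Lemma rho_Cc (K : fieldType) (f : ps K) n d :
  (forall x, f x != 0 -> (d <= mdeg x)%N) -> (n < 6 * d + 50)%N ->
  rho f n = T3 n.+1 n.+1 n.+1 (fun x => f x * Cc K n x).
Proof.
move=> hs hn; rewrite rho_T3; apply: T3_ext_in => i j k _ _ _.
case: (eqVneq (f ((i, j), k)) 0) => [->|h]; first by rewrite !mul0r.
rewrite Mc_bound //; have := hs _ h; lia.
Qed.

Lemma T3_0 (K : fieldType) n1 n2 n3 : T3 n1 n2 n3 (fun _ => 0 : K) = 0.
Proof. by rewrite /T3 big1 // => i _; rewrite big1 // => j _; rewrite big1. Qed.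

Lemma T3_sum (K : fieldType) n1 n2 n3 (ps : seq mon) (G : mon -> mon -> K) :
  T3 n1 n2 n3 (fun x => \sum_(p <- ps) G p x) = \sum_(p <- ps) T3 n1 n2 n3 (G p).
Proof.
elim: ps => [|p ps IH].
  rewrite big_nil; transitivity (T3 n1 n2 n3 (fun _ => 0 : K)); last exact: T3_0.
  by apply: T3_ext_in => *; rewrite big_nil.
rewrite big_cons -IH -T3_add; apply: T3_ext_in => *; by rewrite big_cons.
Qed.

Lemma sum_pick (K : fieldType) (ps : seq mon) (F : mon -> K) x : uniq ps ->
  \sum_(p <- ps) (if x == p then F p else 0) = if x \in ps then F x else 0.
Proof.
elim: ps => [|p ps IH] //=; first by rewrite big_nil.
move=> /andP[hp hu]; rewrite big_cons IH // inE.
case: (eqVneq x p) => [->|hxp] /=; last by rewrite add0r.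
by rewrite (negbTE hp) addr0.
Qed.

Lemma T3_pts (K : fieldType) n (ps : seq mon) (F : mon -> K) :
  uniq ps -> all (fun p => [&& (e1 p < n)%N, (e2 p < n)%N & (e3 p < n)%N]) ps ->
  (forall x, x \notin ps -> F x = 0) ->
  T3 n n n F = \sum_(p <- ps) F p.
Proof.
move=> hu hr h0.
rewrite (@T3_ext_in _ _ _ _ _ (fun x => \sum_(p <- ps) (if x == p then F p else 0))).
  rewrite T3_sum big_seq_cond [RHS]big_seq_cond; apply: eq_bigr => p /andP[hp _].
  by rewrite T3_pt (allP hr p hp).
move=> i j k _ _ _; rewrite sum_pick //; case: ifP => // /negbT; exact: h0.
Qed.

Lemma case_eq (K : fieldType) (f : ps K) d n (ps : seq mon) :
  P f -> (forall x, f x != 0 -> (d <= mdeg x)%N) -> (n < 6 * d + 50)%N -> uniq ps ->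
  all (fun p => [&& (e1 p < n.+1)%N, (e2 p < n.+1)%N & (e3 p < n.+1)%N]) ps ->
  (forall x, x \notin ps -> f x != 0 -> (n != wt x) && (n != wt x + 25)%N) ->
  \sum_(p <- ps) f p * Cc K n p = 0.
Proof.
move=> hP hd hn hu hr ho; rewrite -(@T3_pts K n.+1 ps (fun x => f x * Cc K n x)) //.
  by rewrite -(@rho_Cc K f n d hd hn); apply: hP.
move=> x hx; case: (eqVneq (f x) 0) => [->|hf]; first by rewrite mul0r.
by case/andP: (ho x hx hf) => /negbTE h1 /negbTE h2; rewrite /Cc h1 h2 /= mul0r addr0 mulr0.
Qed.

Ltac evalb := repeat match goal with |- context [(?x == ?y)%N] =>
  first [ (have -> : (x == y)%N = true by lia) | (have -> : (x == y)%N = false by lia) ] end.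

Ltac disch_b := rewrite /=; lia.
Ltac disch_u := rewrite /= ?inE ?xpair_eqE /=; lia.
Ltac disch_r := rewrite /= /e1 /e2 /e3 /=; lia.
Ltac disch_o hs := let a := fresh "a" in let b := fresh "b" in let c := fresh "c" in
  let hn := fresh "hn" in let hf := fresh "hf" in
  move=> [[a b] c]; rewrite ?inE ?xpair_eqE /wt /e1 /e2 /e3 /= => hn hf; have := hs a b c hf; lia.
Definition simpE := (big_cons, big_nil, addr0, add0r, mulr0, mul0r, mulr1, mul1r, mulr1n, mulr0n).

Lemma LM_div (K : fieldType) (char2 : (2%N \in [pchar K])%R) (f : ps K) m :
  P f -> is_LM f m -> (2 <= e3 m)%N \/ (3 <= e2 m)%N.
Proof.
move=> hP [hm hsup].
case: m hm hsup => [[a0 b0] c0] hm hsup.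
have hs : forall a b c, f ((a, b), c) != 0 ->
  (a = a0 /\ b = b0 /\ c = c0) \/ (a0 + b0 + c0 < a + b + c)%N \/
  (a0 + b0 + c0 = a + b + c /\ ((c0 < c)%N \/ (c0 = c /\ (b0 < b)%N) \/ (c0 = c /\ b0 = b /\ (a0 < a)%N))).
  move=> a b c h; case: (hsup _ h) => [[-> -> ->]|]; first by left.
  by rewrite /ds_gt /mdeg /e1 /e2 /e3 /= => H; right.
have hd : forall x, f x != 0 -> (a0 + b0 + c0 <= mdeg x)%N.
  move=> [[a b] c] h; have := hs a b c h; rewrite /mdeg /e1 /e2 /e3 /=; lia.
rewrite /e2 /e3 /=.
case: (leqP 2 c0) => hc; first by left.
case: (leqP 3 b0) => hb; first by right.
exfalso; move: hm.
have E := fun n ps => @case_eq K f (a0 + b0 + c0) n ps hP hd.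
have h11 : (1 + 1 : K) = 0 by rewrite -(pcharf0 char2).
clear hsup; case: b0 hb hs hd E => [|[|[|b0]]] hb hs hd E //; case: c0 hc hs hd E => [|[|c0]] hc hs hd E //.
-
  have H := E (6 * a0)%N [:: ((a0, 0%N), 0%N)] ltac:(disch_b) ltac:(disch_u) ltac:(disch_r) ltac:(disch_o hs).
  move: H; rewrite !simpE /Cc /wt /e1 /e2 /e3 /=; evalb; rewrite /= ?simpE => ->; by rewrite eqxx.
-
  have H := E (6 * a0 + 10)%N [:: ((a0, 0%N), 1%N)] ltac:(disch_b) ltac:(disch_u) ltac:(disch_r) ltac:(disch_o hs).
  move: H; rewrite !simpE /Cc /wt /e1 /e2 /e3 /=; evalb; rewrite /= ?simpE => ->; by rewrite eqxx.
-
  have H := E (6 * a0 + 8)%N [:: ((a0, 1%N), 0%N)] ltac:(disch_b) ltac:(disch_u) ltac:(disch_r) ltac:(disch_o hs).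
  move: H; rewrite !simpE /Cc /wt /e1 /e2 /e3 /=; evalb; rewrite /= ?simpE => ->; by rewrite eqxx.
-
  have H := E (6 * a0 + 18)%N [:: ((a0, 1%N), 1%N); ((a0 + 3, 0), 0)%N] ltac:(disch_b) ltac:(disch_u) ltac:(disch_r) ltac:(disch_o hs).
  have H' := E (6 * a0 + 43)%N [:: ((a0, 1%N), 1%N); ((a0 + 3, 0), 0)%N] ltac:(disch_b) ltac:(disch_u) ltac:(disch_r) ltac:(disch_o hs).
  move: H H'; rewrite !simpE /Cc /wt /e1 /e2 /e3 /=; evalb; rewrite /= ?simpE.
  rewrite (natr_char2 char2 a0) (natr_char2 char2 (a0 + 3)) oddD /=.
  move=> H1 H2 /eqP; apply; move: H1 H2; case: (odd a0) => /=; rewrite ?simpE //.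
  by move=> H1 H2; rewrite H2 addr0 in H1.
-
  have H := E (6 * a0 + 16)%N [:: ((a0, 2%N), 0%N); ((a0 + 1, 0), 1)%N] ltac:(disch_b) ltac:(disch_u) ltac:(disch_r) ltac:(disch_o hs).
  have H' := E (6 * a0 + 41)%N [:: ((a0, 2%N), 0%N); ((a0 + 1, 0), 1)%N] ltac:(disch_b) ltac:(disch_u) ltac:(disch_r) ltac:(disch_o hs).
  move: H H'; rewrite !simpE /Cc /wt /e1 /e2 /e3 /=; evalb; rewrite /= ?simpE.
  rewrite (natr_char2 char2 a0) (natr_char2 char2 (a0 + 1)) oddD /=.
  move=> H1 H2 /eqP; apply; move: H1 H2; case: (odd a0) => /=; rewrite ?simpE //.
  by move=> H1 H2; rewrite H2 addr0 in H1.
-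
  have H := E (6 * a0 + 26)%N [:: ((a0, 2%N), 1%N); ((a0 + 1, 0), 2); ((a0 + 3, 1), 0)%N] ltac:(disch_b) ltac:(disch_u) ltac:(disch_r) ltac:(disch_o hs).
  have H' := E (6 * a0 + 51)%N [:: ((a0, 2%N), 1%N); ((a0 + 1, 0), 2); ((a0 + 3, 1), 0)%N] ltac:(disch_b) ltac:(disch_u) ltac:(disch_r) ltac:(disch_o hs).
  move: H H'; rewrite !simpE /Cc /wt /e1 /e2 /e3 /=; evalb; rewrite /= ?simpE.
  rewrite (natr_char2 char2 a0) (natr_char2 char2 (a0 + 1)) (natr_char2 char2 (a0 + 3)) !oddD /=.
  move=> H1 H2 /eqP; apply; move: H1 H2; case: (odd a0) => /=; rewrite ?simpE //.
  by move=> H1 H2; rewrite H2 addr0 in H1.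
Qed.


Lemma psmul_mon (K : fieldType) (r : ps K) m a :
  psmul r (psmon K m) a =
  if [&& (e1 m <= e1 a)%N, (e2 m <= e2 a)%N & (e3 m <= e3 a)%N]
  then r (((e1 a - e1 m)%N, (e2 a - e2 m)%N), (e3 a - e3 m)%N) else 0.
Proof.
set c := [&& _, _ & _].
set p : mon := (((e1 a - e1 m)%N, (e2 a - e2 m)%N), (e3 a - e3 m)%N).
rewrite psmul_T3 (@T3_ext_in _ _ _ _ _ (fun y => if y == p then (if c then r p else 0) else 0)).
  rewrite T3_pt; case: ifP => // /negP; case; rewrite /p /e1 /e2 /e3 /=; lia.
move=> i j k hi hj hk; rewrite /psmon /p /c.
case: m p c => [[m1 m2] m3] p c; case: a hi hj hk p c => [[a1 a2] a3] hi hj hk p c.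
rewrite /e1 /e2 /e3 /= in hi hj hk *; rewrite !xpair_eqE.
have -> : ((a1 - i == m1)%N && (a2 - j == m2)%N && (a3 - k == m3)%N) =
  [&& (i == a1 - m1)%N, (j == a2 - m2)%N, (k == a3 - m3)%N & [&& (m1 <= a1)%N, (m2 <= a2)%N & (m3 <= a3)%N]].
  by apply/idP/idP; lia.
case: (i =P (a1 - m1)%N) => [->|] /=; last by rewrite mulr0.
case: (j =P (a2 - m2)%N) => [->|] /=; last by rewrite mulr0.
case: (k =P (a3 - m3)%N) => [->|] /=; last by rewrite mulr0.
by case: ifP; rewrite ?mulr1 ?mulr0.
Qed.

Lemma psmul_split (K : fieldType) (r : ps K) m' m0 :
  psmul r (psmon K (((e1 m' + e1 m0)%N, (e2 m' + e2 m0)%N), (e3 m' + e3 m0)%N)) =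
  psmul (psmul r (psmon K m')) (psmon K m0).
Proof.
apply: functional_extensionality => a.
rewrite !psmul_mon.
case: m' m0 a => [[u1 u2] u3] [[v1 v2] v3] [[a1 a2] a3]; rewrite /e1 /e2 /e3 /=.
case: ifP => h1; case: ifP => h2 //.
- case: ifP => h3; last by exfalso; move/negP: h3; apply; lia.
  congr r; congr (_, _); first congr (_, _); lia.
- by exfalso; move/negP: h2; apply; lia.
- by case: ifP => h3 //; exfalso; move/negP: h1; apply; lia.
Qed.

Lemma ideal_mono (K : fieldType) (S S' : ps K -> Prop) h :
  (forall s, S s -> S' s) -> ideal_gen S h -> ideal_gen S' h.
Proof. by move=> hS [l [hl ->]]; exists l; split => // p hp; apply: hS; apply: hl. Qed.

Lemma LM_g1 (K : fieldType) : is_LM (g1 K) ((0%N, 0%N), 2%N).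
Proof.
split; first by rewrite /g1 /psadd /X /psmon /= !addr0 oner_neq0.
move=> [[i j] k] H; have [E|E] := eqVneq ((i, j), k) ((0%N, 0%N), 2%N); first by left.
right; move: H E; rewrite /g1 /psadd /X /psmon !xpair_eqE /ds_gt /mdeg /e1 /e2 /e3 /=.
case: ifP => h1; case: ifP => h2; case: ifP => h3; rewrite ?simpE ?eqxx //; move=> _ _; lia.
Qed.

Lemma LM_g2 (K : fieldType) : is_LM (g2 K) ((0%N, 3%N), 0%N).
Proof.
split; first by rewrite /g2 /psadd /X /psmon /= !addr0 oner_neq0.
move=> [[i j] k] H; have [E|E] := eqVneq ((i, j), k) ((0%N, 3%N), 0%N); first by left.
right; move: H E; rewrite /g2 /psadd /X /psmon !xpair_eqE /ds_gt /mdeg /e1 /e2 /e3 /=.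
case: ifP => h1; case: ifP => h2; case: ifP => h3; case: ifP => h4; rewrite ?simpE ?eqxx //; move=> _ _; lia.
Qed.

Lemma lift_list (K : fieldType) (char2 : (2%N \in [pchar K])%R) (l : seq (ps K * ps K)) :
  (forall p, In p l -> exists (f : ps K) m, P f /\ ps_nonzero f /\ is_LM f m /\ p.2 = psmon K m) ->
  exists l', (forall p, In p l' -> exists g m, In g [:: g1 K; g2 K] /\ ps_nonzero g /\ is_LM g m
                                    /\ p.2 = psmon K m) /\
    foldr (fun p acc => psadd (psmul p.1 p.2) acc) (ps0 K) l =
    foldr (fun p acc => psadd (psmul p.1 p.2) acc) (ps0 K) l'.
Proof.
elim: l => [|[r s] l IH] hl; first by exists [::].
have [l' [hl' El]] : exists l', (forall p, In p l' -> exists g m, In g [:: g1 K; g2 K] /\ ps_nonzero g /\ is_LM g m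
                                    /\ p.2 = psmon K m) /\
    foldr (fun p acc => psadd (psmul p.1 p.2) acc) (ps0 K) l =
    foldr (fun p acc => psadd (psmul p.1 p.2) acc) (ps0 K) l'.
  by apply: IH => p hp; apply: hl; right.
have [f [m [hf [hnz [hLM /= hs]]]]] := hl (r, s) (or_introl erefl).
case: (LM_div char2 hf hLM) => hm.
- exists ((psmul r (psmon K (((e1 m), (e2 m)), (e3 m - 2)%N)), psmon K ((0%N, 0%N), 2%N)) :: l'); split.
    move=> p [<-|hp]; last exact: hl'.
    exists (g1 K), ((0%N, 0%N), 2%N); split; first by left.
    split; last by split=> //; apply: LM_g1.
    by exists ((0%N, 0%N), 2%N); case: (LM_g1 K).
  rewrite /= El -psmul_split hs; congr (psadd (psmul r (psmon K _)) _).
  by case: m hs hm hLM => [[m1 m2] m3] _; rewrite /e1 /e2 /e3 /= => hm _; apply/eqP; rewrite !xpair_eqE; lia.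
- exists ((psmul r (psmon K (((e1 m), (e2 m - 3)%N), (e3 m))), psmon K ((0%N, 3%N), 0%N)) :: l'); split.
    move=> p [<-|hp]; last exact: hl'.
    exists (g2 K), ((0%N, 3%N), 0%N); split; first by right; left.
    split; last by split=> //; apply: LM_g2.
    by exists ((0%N, 3%N), 0%N); case: (LM_g2 K).
  rewrite /= El -psmul_split hs; congr (psadd (psmul r (psmon K _)) _).
  by case: m hs hm hLM => [[m1 m2] m3] _; rewrite /e1 /e2 /e3 /= => hm _; apply/eqP; rewrite !xpair_eqE; lia.
Qed.

Theorem mainTheorem11 (K : fieldType) (char2 : (2%N \in [pchar K])%R) :
  standard_basis (@P K) [:: g1 K; g2 K].
Proof.
split.
  move=> g [<-|[<-|[]]]; [exact: g1_P | exact: g2_P].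
move=> h; split.
  apply: ideal_mono => s [g [m [hg [hnz [hLM ->]]]]].
  exists g, m; split=> //.
  by case: hg => [<-|[<-|[]]]; [exact: g1_P | exact: g2_P].
move=> [l [hl ->]].
have [l' [hl' ->]] := lift_list char2 hl.
by exists l'.
Qed.
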